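(* Let $\beta>2\alpha>0$ with $\beta+2\alpha>1$, and let $\varphi_N(x)=\frac12x^TAx-\sum_{k=1}^{s_N}\log\cosh(x^TAe_k)$ for $x\in\mathbb{R}^{s_N}$. Then $\varphi_N$ attains its minimum at $x=\overrightarrow{m}^*$ and at $x=-\overrightarrow{m}^*$, where $\overrightarrow{m}^*=(m^*,\dots,m^* )\in\mathbb{R}^{s_N}$ and $m^*=m^*(\beta+2\alpha)$ is the largest solution of $x=\tanh((\beta+2\alpha)x)$.
   Context: $A$ is the $s_N\times s_N$ symmetric circulant matrix $A=\beta I+\alpha(P+P^T)$, where $P$ is the cyclic shift matrix (so $A_{kk}=\beta$, $A_{k,k\pm1}=\alpha$ with indices mod $s_N$); $e_k$ are the standard basis vectors of $\mathbb{R}^{s_N}$. *)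

(* Defs.v *)
From HB Require Import structures.
From mathcomp Require Import all_boot all_order all_algebra.
From mathcomp Require Import all_classical all_reals all_analysis.
Set Implicit Arguments. Unset Strict Implicit. Unset Printing Implicit Defensive.
Import Order.TTheory GRing.Theory Num.Theory.
Local Open Scope ring_scope.

Definition cosh {R : realType} (x : R) : R := (expR x + expR (- x)) / 2.
Definition sinh {R : realType} (x : R) : R := (expR x - expR (- x)) / 2.
Definition tanh {R : realType} (x : R) : R := sinh x / cosh x.

Definition shift_mx {R : realType} (n : nat) : 'M[R]_n :=
  \matrix_(i < n, j < n) ((i == ordS j)%:R).

Definition circA {R : realType} (n : nat) (alpha beta : R) : 'M[R]_n :=
  beta%:M + alpha *: (shift_mx n + (shift_mx n)^T).

Definition e_ {R : realType} (n : nat) (k : 'I_n) : 'cV[R]_n := delta_mx k 0.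

Definition phiN {R : realType} (n : nat) (alpha beta : R) (x : 'cV[R]_n) : R :=
  2^-1 * (x^T *m circA n alpha beta *m x) 0 0
  - \sum_(k < n) ln (cosh ((x^T *m circA n alpha beta *m e_ k) 0 0)).

(* Main.v *)
Require Import Defs.
From HB Require Import structures.
From mathcomp Require Import all_boot all_order all_algebra.
From mathcomp Require Import all_classical all_reals all_analysis.
From mathcomp Require Import ring lra.
Set Implicit Arguments. Unset Strict Implicit. Unset Printing Implicit Defensive.
Import Order.TTheory GRing.Theory Num.Theory.
Import numFieldNormedType.Exports.
Local Open Scope classical_set_scope.
Local Open Scope ring_scope.

Section An.
Variable R : realType.
Implicit Types x y u : R.

Lemma expRNM y : expR y * expR (- y) = 1 :> R.
Proof. by rewrite -expRD subrr expR0. Qed.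

Lemma cosh_gt0 y : 0 < cosh y :> R.
Proof. by rewrite /cosh divr_gt0 // addr_gt0 // expR_gt0. Qed.

Lemma coshN y : cosh (- y) = cosh y :> R.
Proof. by rewrite /cosh opprK addrC. Qed.

Lemma cosh2_sinh2 y : cosh y ^+ 2 - sinh y ^+ 2 = 1 :> R.
Proof.
rewrite /cosh /sinh; have := expRNM y.
set a := expR y; set b := expR (- y) => h.
by rewrite -[X in _ = X]h; field.
Qed.

Lemma is_derive_expN y : is_derive y 1 (fun x : R => expR (- x)) (- expR (- y)).
Proof.
have -> : (fun x : R => expR (- x)) = expR \o -%R by [].
have := @is_derive1_comp R expR -%R y _ _ (is_derive_expR (- y)) (is_deriveNid y 1).
by move=> H; apply: is_derive_eq H _; rewrite mulrN1.
Qed.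

Lemma is_derive_cosh y : is_derive y 1 (@cosh R) (sinh y).
Proof.
have -> : @cosh R = 2^-1 \*: ((@expR R) + (fun x : R => expR (- x))).
  by apply/funext => x; rewrite /cosh /= mulrC.
have := is_deriveZ (2^-1) (is_deriveD (is_derive_expR y) (is_derive_expN y)).
move=> H; apply: is_derive_eq H _.
by rewrite /sinh /= mulrC.
Qed.

Lemma is_derive_sinh y : is_derive y 1 (@sinh R) (cosh y).
Proof.
have -> : @sinh R = 2^-1 \*: ((@expR R) - (fun x : R => expR (- x))).
  by apply/funext => x; rewrite /sinh /= mulrC.
have := is_deriveZ (2^-1) (is_deriveB (is_derive_expR y) (is_derive_expN y)).
move=> H; apply: is_derive_eq H _.
by rewrite /cosh /= opprK mulrC.
Qed.

Lemma is_derive_tanh y : is_derive y 1 (@tanh R) ((cosh y)^-2).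
Proof.
have -> : @tanh R = (@sinh R) * (fun x => (cosh x)^-1).
  by apply/funext => x.
have c0 : cosh y != 0 by rewrite gt_eqF // cosh_gt0.
have := is_deriveM (is_derive_sinh y) (is_deriveV c0 (is_derive_cosh y)).
move=> H; apply: is_derive_eq H _.
have := cosh2_sinh2 y => h.
rewrite /GRing.scale /=.
transitivity ((cosh y ^+ 2 - sinh y ^+ 2) / cosh y ^+ 2); first by field.
by rewrite h mul1r.
Qed.

Lemma is_derive_lncosh y : is_derive y 1 (fun x => ln (@cosh R x)) (tanh y).
Proof.
have -> : (fun x => ln (@cosh R x)) = (@ln R) \o (@cosh R) by [].
have := is_derive1_comp (is_derive1_ln (cosh_gt0 y)) (is_derive_cosh y).
by move=> H; apply: is_derive_eq H _; rewrite /tanh mulrC.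
Qed.


Lemma cont_of_der (f df : R -> R) a b :
  (forall x, is_derive x 1 f (df x)) -> {within `[a, b], continuous f}.
Proof.
move=> H; apply/continuous_subspaceT => r.
apply: differentiable_continuous; apply/derivable1_diffP.
have := H r; case=> //.
Qed.

Lemma mvt (f df : R -> R) a b : a < b ->
  (forall x, is_derive x 1 f (df x)) ->
  exists2 c, a < c < b & f b - f a = df c * (b - a).
Proof.
move=> ab H; have [c cab e] := MVT ab (fun x _ => H x) (@cont_of_der f df a b H).
by exists c => //; move: cab; rewrite in_itv.
Qed.

Lemma tanh0 : tanh 0 = 0 :> R.
Proof. by rewrite /tanh /sinh oppr0 subrr mul0r mul0r. Qed.

Lemma cosh_mono a b : 0 <= a -> a <= b -> cosh a <= cosh b :> R.
Proof.
move=> a0 ab.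
have hA := expRNM a; have hB := expRNM b.
have AB : expR a <= expR b by rewrite ler_expR.
have A'1 : expR (- a) <= 1 by rewrite -expR0 ler_expR oppr_le0.
have B'1 : expR (- b) <= 1 by rewrite -expR0 ler_expR oppr_le0 (le_trans a0).
have B'0 := expR_ge0 (- b); have A'0 := expR_ge0 (- a).
rewrite /cosh ler_pM2r ?invr_gt0 ?ltr0n //.
move: hA hB AB A'1 B'1 B'0 A'0.
set A := expR a; set A' := expR (- a); set B := expR b; set B' := expR (- b).
move=> hA hB AB A'1 B'1 B'0 A'0.
have e : B + B' - (A + A') = (B - A) * (1 - A' * B').
  transitivity (B - A - A' * (B * B') + (A * A') * B'); first by rewrite hA hB; ring.
  ring.
rewrite -subr_ge0 e mulr_ge0 // ?subr_ge0 //.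
by rewrite mulr_ile1.
Qed.

Definition W u y : R := u * tanh y - tanh u * y.
Definition dW u y : R := u * (cosh y)^-2 - tanh u.

Lemma is_derive_W u y : is_derive y 1 (W u) (dW u y).
Proof.
have -> : W u = u \*: (@tanh R) - tanh u \*: id by apply/funext => x.
have := is_deriveB (is_deriveZ u (is_derive_tanh y)) (is_deriveZ (tanh u) (is_derive_id y 1)).
by move=> H; apply: is_derive_eq H _; rewrite /dW /GRing.scale /= mulr1.
Qed.

Lemma dW_anti u s t : 0 < u -> 0 <= s -> s <= t -> dW u t <= dW u s.
Proof.
move=> u0 s0 st; rewrite /dW lerD2r ler_pM2l // ler_pV2 ?inE ?exprn_gt0 ?cosh_gt0 //.
have c1 := cosh_mono s0 st; have c0 := cosh_gt0 s.
rewrite !expr2 ler_pM // ?ltW //.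
all: by rewrite unitfE andbT mulf_neq0 // gt_eqF // cosh_gt0.
Qed.

Lemma W0 u : W u 0 = 0.
Proof. by rewrite /W tanh0 mulr0 mulr0 subrr. Qed.

Lemma Wu u : W u u = 0.
Proof. by rewrite /W mulrC subrr. Qed.

Lemma W_nonneg u y : 0 < u -> 0 < y -> y < u -> 0 <= W u y.
Proof.
move=> u0 y0 yu.
have [c1 /andP[c10 c1y] e1] := mvt y0 (is_derive_W u).
have [c2 /andP[yc2 c2u] e2] := mvt yu (is_derive_W u).
rewrite W0 !subr0 in e1; rewrite Wu in e2.
have hab : dW u c2 <= dW u c1 by apply: dW_anti => //; [exact: ltW | exact: ltW (lt_trans c1y yc2)].
set w := W u y in e1 e2 *; set a := dW u c1 in e1 hab *; set b := dW u c2 in e2 hab *.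
have h : 0 <= (a - b) * (y * (u - y)).
  by rewrite mulr_ge0 // ?subr_ge0 // mulr_ge0 // ?subr_ge0 ltW.
have e : (a - b) * (y * (u - y)) = w * u.
  transitivity ((a * y) * (u - y) - y * (0 - w)); last by rewrite -e1; ring.
  by rewrite e2; ring.
rewrite e in h; by rewrite -(pmulr_lge0 _ u0).
Qed.

Lemma W_nonpos u y : 0 < u -> u < y -> W u y <= 0.
Proof.
move=> u0 uy.
have [c1 /andP[c10 c1u] e1] := mvt u0 (is_derive_W u).
have [c2 /andP[uc2 c2y] e2] := mvt uy (is_derive_W u).
rewrite W0 Wu !subr0 in e1; rewrite Wu subr0 in e2.
have a0 : dW u c1 = 0.
  by apply/eqP; move: e1 => /esym/eqP; rewrite mulf_eq0 (gt_eqF u0) orbF.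
have hab : dW u c2 <= dW u c1 by apply: dW_anti => //; [exact: ltW | exact: ltW (lt_trans c1u uc2)].
rewrite a0 in hab; rewrite e2.
by rewrite mulr_le0_ge0 // subr_ge0 ltW.
Qed.


Definition G u y : R := ln (cosh y) - tanh u / (2 * u) * (y * y).
Definition dG u y : R := tanh y - tanh u / u * y.

Lemma is_derive_G u y : 0 < u -> is_derive y 1 (G u) (dG u y).
Proof.
move=> u0.
have -> : G u = (fun x => ln (@cosh R x)) - (tanh u / (2 * u)) \*: (id * id).
  by apply/funext => x.
have := is_deriveB (is_derive_lncosh y)
   (is_deriveZ (tanh u / (2 * u)) (is_deriveM (is_derive_id y 1) (is_derive_id y 1))).
move=> H; apply: is_derive_eq H _; rewrite /dG /GRing.scale /= !mulr1.
by field; rewrite gt_eqF.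
Qed.

Lemma dG_W u y : 0 < u -> dG u y = W u y / u.
Proof. by move=> u0; rewrite /dG /W; field; rewrite gt_eqF. Qed.

Lemma G_max u y : 0 < u -> G u y <= G u u.
Proof.
move=> u0.
wlog y0 : y / 0 <= y.
  move=> H; have [/H //|yn] := leP 0 y.
  have -> : G u y = G u (- y) by rewrite /G coshN mulrNN.
  by apply: H; rewrite oppr_ge0 ltW.
have [yu|uy|->] := ltgtP y u; last exact: lexx.
- have [c /andP[yc cu] e] := mvt yu (fun x => is_derive_G x u0).
  rewrite -subr_ge0 e; apply: mulr_ge0; last by rewrite subr_ge0 ltW.
  rewrite dG_W // divr_ge0 ?(ltW u0) //.
  by apply: W_nonneg => //; apply: le_lt_trans yc.
- have [c /andP[uc cy] e] := mvt uy (fun x => is_derive_G x u0).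
  rewrite -subr_le0 e; apply: mulr_le0_ge0; last by rewrite subr_ge0 ltW.
  by rewrite dG_W // pmulr_lle0 ?invr_gt0 // W_nonpos.
Qed.

Lemma tanh_lt1 z : tanh z < 1 :> R.
Proof.
rewrite /tanh ltr_pdivrMr ?cosh_gt0 // mul1r /sinh /cosh ltr_pM2r ?invr_gt0 ?ltr0n //.
by rewrite ltrD2l gtrN // expR_gt0.
Qed.

Lemma tanh_lb z : 0 <= z -> z / (1 + z) <= tanh z :> R.
Proof.
move=> z0.
have hE := expRNM z; have E1 := expR_ge1Dx z; have E0 := expR_gt0 z.
have E'0 := expR_gt0 (- z).
rewrite /tanh /sinh /cosh.
have -> : (expR z - expR (- z)) / 2 / ((expR z + expR (- z)) / 2)
   = (expR z - expR (- z)) / (expR z + expR (- z)).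
  by field; rewrite gt_eqF // addr_gt0.
move: hE E1 E0 E'0; set E := expR z; set E' := expR (- z) => hE E1 E0 E'0.
have hz : 0 < 1 + z by lra.
rewrite ler_pdivrMr // mulrAC ler_pdivlMr ?addr_gt0 //.
have h2 : E * E >= (1 + z) * (1 + z) by rewrite ler_pM // addr_ge0.
have h3 : 0 <= E' * (E * E - 1 - 2 * z).
  by rewrite mulr_ge0 ?(ltW E'0) //; nra.
have h4 : E' * (E * E - 1 - 2 * z) = (E * E') * E - E' - 2 * z * E' by ring.
rewrite hE mul1r in h4.
rewrite -subr_ge0.
have -> : (E - E') * (1 + z) - z * (E + E') = E - E' - 2 * z * E' by ring.
by rewrite -h4.
Qed.

Lemma pos_root c : 1 < c -> exists2 t : R, 0 < t & t = tanh (c * t).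
Proof.
move=> c1.
have c0 : 0 < c by apply: lt_trans c1.
pose f := fun t : R => tanh (c * t) - t.
have df (t : R) : is_derive t (1 : R) f (c * (cosh (c * t))^-2 - 1).
  have -> : f = ((@tanh R) \o (c \*: id)) - id by apply/funext.
  have := is_deriveB (is_derive1_comp (is_derive_tanh (c * t)) (is_deriveZ c (is_derive_id t 1))) (is_derive_id t 1).
  by move=> H; apply: is_derive_eq H _; rewrite /GRing.scale /= mulr1 mulrC.
pose e := (c - 1) / (2 * c).
have e0 : 0 < e by rewrite divr_gt0 ?subr_gt0 // mulr_gt0.
have e1 : e <= 1.
  by rewrite /e ler_pdivrMr ?mulr_gt0 // mul1r; lra.
have fe : 0 <= f e.
  rewrite /f subr_ge0.
  have z0 : 0 <= c * e by rewrite mulr_ge0 ?ltW.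
  apply: le_trans (tanh_lb z0).
  have -> : c * e = (c - 1) / 2 by rewrite /e; field; rewrite gt_eqF.
  rewrite /e ler_pdivrMr ?mulr_gt0 //.
  rewrite mulrAC ler_pdivlMr ?addr_gt0 ?divr_gt0 ?subr_gt0 //.
  rewrite -subr_ge0.
  have -> : (c - 1) / 2 * (2 * c) - (c - 1) * (1 + (c - 1) / 2) = (c - 1) * (c - 1) / 2.
    by field.
  by rewrite divr_ge0 // mulr_ge0 // subr_ge0 ltW.
have f1 : f 1 <= 0 by rewrite /f subr_le0 ltW // tanh_lt1.
have := IVT (v := 0) e1 (@cont_of_der f _ e 1 df).
case=> [|t tI ft]; first by rewrite ge_min le_max f1 fe orbT.
exists t.
  by move: tI; rewrite in_itv /= => /andP[+ _]; apply: lt_le_trans.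
by apply/eqP; rewrite eq_sym -subr_eq0; apply/eqP.
Qed.

End An.

Section Mx.
Variable R : realType.

Definition Yf n (al be : R) (x : 'I_n -> R) k :=
  be * x k + al * (x (ordS k) + x (ord_pred k)).

Lemma sum_delta n (F : 'I_n -> R) a : \sum_j F j * (j == a)%:R = F a.
Proof.
rewrite (bigD1 a) //= eqxx mulr1 big1 ?addr0 // => j /negbTE ->.
by rewrite mulr0.
Qed.

Lemma eq_ordS n (j k : 'I_n) : (k == ordS j) = (j == ord_pred k).
Proof.
by apply/eqP/eqP => [->|->]; [rewrite ordSK | rewrite ord_predK].
Qed.

Lemma yk_eq n (al be : R) (x : 'cV[R]_n) k :
  (x^T *m circA n al be *m e_ k) 0 0 = Yf al be (fun i => x i 0) k.
Proof.
rewrite /e_ -colE mxE mxE /Yf.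
have E j : x^T 0 j * circA n al be j k =
   be * (x j 0 * (j == k)%:R) + al * (x j 0 * (j == ordS k)%:R)
   + al * (x j 0 * (j == ord_pred k)%:R).
  rewrite /circA /shift_mx !mxE [k == ordS j]eq_ordS -mulr_natr; ring.
rewrite (eq_bigr _ (fun j _ => E j)) !big_split /= -!mulr_sumr !sum_delta.
ring.
Qed.

Lemma quadE n (al be : R) (x : 'cV[R]_n) :
  (x^T *m circA n al be *m x) 0 0 =
  \sum_k x k 0 * (x^T *m circA n al be *m e_ k) 0 0.
Proof.
rewrite mxE; apply: eq_bigr => k _; rewrite mulrC; congr (_ * _).
by rewrite /e_ -colE !mxE.
Qed.

Lemma tele n (al be : R) (x : 'I_n -> R) : 0 < al -> 2 * al < be ->
  0 <= \sum_k ((be + 2 * al) * x k * Yf al be x k - Yf al be x k ^+ 2).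
Proof.
move=> a0 ab.
pose Hf (a b : R) := 2 * al * a * a + (be - 2 * al) * a * b - be * b * b.
have e k : (be + 2 * al) * x k * Yf al be x k - Yf al be x k ^+ 2 =
   al * ((be - 2 * al) * (x (ordS k) - x k) ^+ 2 + al * (x (ordS k) - x (ord_pred k)) ^+ 2)
   + al * (Hf (x k) (x (ordS k)) - Hf (x (ord_pred k)) (x k)).
  rewrite /Hf /Yf; ring.
rewrite (eq_bigr _ (fun k _ => e k)) big_split /=.
have -> : \sum_k al * (Hf (x k) (x (ordS k)) - Hf (x (ord_pred k)) (x k)) = 0.
  rewrite -mulr_sumr sumrB.
  have -> : \sum_k Hf (x (ord_pred k)) (x k) = \sum_k Hf (x k) (x (ordS k)).
    rewrite [in RHS](reindex_inj (@ord_pred_inj n)) /=.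
    by apply: eq_bigr => k _; rewrite ord_predK.
  by rewrite subrr mulr0.
rewrite addr0; apply: sumr_ge0 => k _.
apply: mulr_ge0; first exact: ltW.
apply: addr_ge0; apply: mulr_ge0; rewrite ?sqr_ge0 ?subr_ge0 ?ltW //.
Qed.

End Mx.

Unset Implicit Arguments.

Theorem lemma4p5 (R : realType) (n : nat) (alpha beta mstar : R) :
  0 < alpha -> 2 * alpha < beta -> 1 < beta + 2 * alpha ->
  mstar = tanh ((beta + 2 * alpha) * mstar) ->
  (forall y : R, y = tanh ((beta + 2 * alpha) * y) -> y <= mstar) ->
  forall x : 'cV[R]_n,
    phiN alpha beta (const_mx mstar : 'cV[R]_n) <= phiN alpha beta x /\
    phiN alpha beta (- const_mx mstar : 'cV[R]_n) <= phiN alpha beta x.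
Proof.
move=> a0 ab c1 hm hmax x.
have [t t0 ht] := pos_root c1.
have m0 : 0 < mstar := lt_le_trans t0 (hmax t ht).
set c := beta + 2 * alpha in c1 hm hmax *.
have c0 : 0 < c by apply: lt_trans c1.
set u := c * mstar in hm.
have u0 : 0 < u by rewrite mulr_gt0.
have k : tanh u / (2 * u) = (2 * c)^-1.
  by rewrite -hm /u; field; rewrite !gt_eqF.
set L := ln (cosh u) - (2 * c)^-1 * (u * u).
have bound y : ln (cosh y) <= (2 * c)^-1 * (y * y) + L.
  have := G_max y u0; rewrite /G k /L; lra.
have phiE (z : 'cV[R]_n) : phiN alpha beta z =
   \sum_k (2^-1 * (z k 0 * Yf alpha beta (fun i => z i 0) k)
           - ln (cosh (Yf alpha beta (fun i => z i 0) k))).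
  rewrite /phiN quadE mulr_sumr -sumrB; apply: eq_bigr => i _.
  by rewrite !yk_eq.
have lowx : \sum_(i < n) (- L) <= phiN alpha beta x.
  rewrite phiE.
  apply: (@le_trans _ _ (\sum_i ((2 * c)^-1 *
     (c * x i 0 * Yf alpha beta (fun j => x j 0) i
      - Yf alpha beta (fun j => x j 0) i ^+ 2) - L))).
    rewrite -subr_ge0 -sumrB.
    rewrite (eq_bigr (fun i => (2 * c)^-1 *
     (c * x i 0 * Yf alpha beta (fun j => x j 0) i
      - Yf alpha beta (fun j => x j 0) i ^+ 2))); last by move=> i _; ring.
    rewrite -mulr_sumr; apply: mulr_ge0; first by rewrite invr_ge0 mulr_ge0 // ltW.
    exact: tele.
  apply: ler_sum => i _.
  set Y := Yf _ _ _ i.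
  have := bound Y.
  have -> : (2 * c)^-1 * (c * x i 0 * Y - Y ^+ 2) = 2^-1 * (x i 0 * Y) - (2 * c)^-1 * (Y * Y).
    by field; rewrite gt_eqF.
  lra.
split; apply: le_trans lowx; rewrite phiE le_eqVlt; apply/orP; left; apply/eqP;
  apply: eq_bigr => i _; rewrite /Yf !mxE.
- have -> : beta * mstar + alpha * (mstar + mstar) = u by rewrite /u /c; ring.
  by rewrite /L /u /c; field; exact: lt0r_neq0 c0.
- set Y := (beta * _ + _).
  have -> : Y = - u by rewrite /Y /u /c; ring.
  by rewrite coshN /L /u /c; field; exact: lt0r_neq0 c0.
Qed.
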